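(* Let $G$ be a bus graph containing a $(B,o)$-flipper (as defined below), a $\mathcal{C}$-vertex $i$ joined to the flipper by the edge $(B,i)$, and a $\mathcal{B}$-vertex $O$ joined to the flipper by the edge $(O,o)$. Then in any realization $\Gamma$ of $G$: (1) $\Gamma((B,i))$ and $\Gamma((O,o))$ are perpendicular; (2) $\Gamma(B)$ and $\Gamma(O)$ are perpendicular.
   Context: A bus graph is a finite bipartite graph $G=(\mathcal{B},\mathcal{C};\mathcal{E})$ with $\deg(c)\le 4$ for all $c\in\mathcal{C}$. A realization $\Gamma$ of $G$ in the integer grid is a drawing such that: (1) each $B\in\mathcal{B}$ is drawn as a closed line segment $\Gamma(B)$ along a grid line (a ''bus''); (2) each $c\in\mathcal{C}$ is drawn as a grid point $\Gamma(c)$; (3) each edge $(B,c)\in\mathcal{E}$ is drawn as a closed line segment along a grid line between a point of $\Gamma(B)$ and $\Gamma(c)$, perpendicular to $\Gamma(B)$, containing no connectors or buses other than $\Gamma(B)$ and $\Gamma(c)$ (edges may cross other edges); (4) no two buses or connectors intersect. An $(A,B)$-perp consists of three distinct $\mathcal{C}$-vertices $x,y,z$, five distinct $\mathcal{B}$-vertices $A,A',B,B',C$, and the twelve edges $(A,x),(A',x),(B,x),(B',x)$, $(A,y),(A',y),(B,y),(C,y)$, $(A,z),(A',z),(B',z),(C,z)$. A $(B,o)$-flipper consists of an $(A,B)$-perp together with one additional $\mathcal{C}$-vertex $o$ and two additional edges $(B,o)$ and $(B',o)$. *)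

(* Defs.v *)
From HB Require Import structures.
From mathcomp Require Import all_boot all_order all_algebra.
Set Implicit Arguments. Unset Strict Implicit. Unset Printing Implicit Defensive.
Import Order.TTheory GRing.Theory Num.Theory.
Local Open Scope ring_scope.

Definition point := (int * int)%type.

(** An axis-parallel closed segment along a grid line:
    if [horiz s], it is {(t, fixc s) | lo s <= t <= hi s};
    otherwise it is {(fixc s, t) | lo s <= t <= hi s}. *)
Record seg := Seg { horiz : bool; fixc : int; lo : int; hi : int }.

Definition well_formed_seg (s : seg) : bool := lo s <= hi s.

(** Grid point p lies on segment s.  (All segments here have integer
    data, so two of them meet iff they share a grid point.) *)
Definition on_seg (s : seg) (p : point) : bool :=
  if horiz s then (p.2 == fixc s) && (lo s <= p.1 <= hi s)
  else (p.1 == fixc s) && (lo s <= p.2 <= hi s).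

Definition seg_meet (s t : seg) : Prop := exists p : point, on_seg s p && on_seg t p.

Definition perpendicular (s t : seg) : bool := horiz s != horiz t.

Definition attach (s : seg) (p : point) : point :=
  if horiz s then (p.1, fixc s) else (fixc s, p.2).

Definition edge_seg (s : seg) (p : point) : seg :=
  if horiz s then Seg false p.1 (Num.min (fixc s) p.2) (Num.max (fixc s) p.2)
  else Seg true p.2 (Num.min (fixc s) p.1) (Num.max (fixc s) p.1).

(** Bus graph: bipartite graph with sides Bv (buses) and Cv (connectors),
    edge relation E, every connector of degree at most 4. *)
Definition bus_graph (Bv Cv : finType) (E : Bv -> Cv -> bool) : Prop :=
  forall c : Cv, (#|[set b | E b c]| <= 4)%N.

(** Realization: bus b drawn as segment gb b, connector c as grid point gc c;
    edge (b,c) drawn as edge_seg (gb b) (gc c). *)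
Definition realization (Bv Cv : finType) (E : Bv -> Cv -> bool)
    (gb : Bv -> seg) (gc : Cv -> point) : Prop :=
  [/\
      forall b, well_formed_seg (gb b),
      (* (3) edges: perpendicular to the bus, from a point of the bus to the connector *)
      forall b c, E b c -> on_seg (gb b) (attach (gb b) (gc c)),
      forall b c c', E b c -> c' != c -> ~~ on_seg (edge_seg (gb b) (gc c)) (gc c'),
      forall b c b', E b c -> b' != b -> ~ seg_meet (edge_seg (gb b) (gc c)) (gb b')
    &
      [/\ forall b b', b != b' -> ~ seg_meet (gb b) (gb b'),
          forall c c', c != c' -> gc c != gc c'
        & forall b c, ~~ on_seg (gb b) (gc c)]].

Definition perp (Bv Cv : finType) (E : Bv -> Cv -> bool)
    (A A' B B' C : Bv) (x y z : Cv) : Prop :=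
  [/\ uniq [:: x; y; z], uniq [:: A; A'; B; B'; C],
      [&& E A x, E A' x, E B x & E B' x],
      [&& E A y, E A' y, E B y & E C y]
    & [&& E A z, E A' z, E B' z & E C z]].

Definition flipper (Bv Cv : finType) (E : Bv -> Cv -> bool)
    (A A' B B' C : Bv) (x y z o : Cv) : Prop :=
  [/\ perp E A A' B B' C x y z, o \notin [:: x; y; z], E B o & E B' o].

(* Main.v *)
Require Import Defs.
From mathcomp Require Import all_boot all_order all_algebra.
From mathcomp Require Import zify.
Set Implicit Arguments. Unset Strict Implicit. Unset Printing Implicit Defensive.
Import Order.TTheory GRing.Theory Num.Theory.

Section Helpers.
Local Open Scope ring_scope.

Definition coordp (s : seg) (p : point) : int := if horiz s then p.2 else p.1.

Lemma block (Bv Cv : finType) (E : Bv -> Cv -> bool) (gb : Bv -> seg) (gc : Cv -> point)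
  (HR : realization E gb gc) b b' c :
  E b c -> E b' c -> b != b' -> horiz (gb b) = horiz (gb b') ->
  (coordp (gb b) (gc c) <= fixc (gb b) <= fixc (gb b')) \/
  (fixc (gb b') <= fixc (gb b) <= coordp (gb b) (gc c)) -> False.
Proof.
case: HR => _ H2 _ H4 _ Ebc Eb'c nbb' hh Hc.
have nb'b : b' != b by rewrite eq_sym.
apply: (H4 b' c b Eb'c nbb').
exists (attach (gb b) (gc c)).
rewrite (H2 b c Ebc) andbT.
move: Hc; rewrite /coordp /attach /edge_seg /on_seg -hh.
case: (gc c) => p1 p2 /=.
case: (horiz (gb b)) => /=; rewrite eqxx /=;
  rewrite /Num.min /Num.max /Order.min /Order.max;
  case: ltP => ? ; lia.
Qed.

Definition side (s : seg) (p : point) : bool := fixc s < coordp s p.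

Lemma side_ne (Bv Cv : finType) (E : Bv -> Cv -> bool) (gb : Bv -> seg) (gc : Cv -> point)
  (HR : realization E gb gc) b b' c :
  E b c -> E b' c -> b != b' -> horiz (gb b) = horiz (gb b') ->
  side (gb b) (gc c) != side (gb b') (gc c).
Proof.
move=> Ebc Eb'c nbb' hh.
have nb'b : b' != b by rewrite eq_sym.
have ne : forall d, E d c -> fixc (gb d) != coordp (gb d) (gc c).
  move=> d Edc; apply/negP => /eqP Heq.
  case: HR => _ H2 _ _ [_ _ H5].
  move: (H2 d c Edc) (H5 d c); rewrite /attach /coordp in Heq *.
  case: (gc c) Heq => p1 p2 /=.
  by case: (horiz (gb d)) => /= ->; move=> + H; rewrite (negbTE H).
have n1 := ne b Ebc; have n2 := ne b' Eb'c.
have b1 := block HR Ebc Eb'c nbb' hh.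
have b2 := block HR Eb'c Ebc nb'b (esym hh).
move: n1 n2 b1 b2; rewrite /side /coordp -hh.
set q := (if horiz (gb b) then (gc c).2 else (gc c).1).
set f1 := fixc (gb b); set f2 := fixc (gb b').
move=> n1 n2 b1 b2; apply/negP => /eqP Hs.
move: Hs n1 n2 b1 b2.
case: (ltP f1 q); case: (ltP f2 q) => // l1 l2 _ n1 n2 b1 b2.
- case: (leP f1 f2) => h.
  + by apply: b2; right; lia.
  + by apply: b1; right; lia.
- case: (leP f1 f2) => h.
  + by apply: b1; left; lia.
  + by apply: b2; left; lia.
Qed.

Lemma no3 (Bv Cv : finType) (E : Bv -> Cv -> bool) (gb : Bv -> seg) (gc : Cv -> point)
  (HR : realization E gb gc) b1 b2 b3 c :
  E b1 c -> E b2 c -> E b3 c -> uniq [:: b1; b2; b3] ->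
  horiz (gb b1) = horiz (gb b2) -> horiz (gb b2) = horiz (gb b3) -> False.
Proof.
move=> E1 E2 E3; rewrite /= !inE => /andP [/norP [n12 n13] /andP [n23 _]] h12 h23.
have s12 := side_ne HR E1 E2 n12 h12.
have s23 := side_ne HR E2 E3 n23 h23.
have s13 := side_ne HR E1 E3 n13 (etrans h12 h23).
by move: s12 s23 s13; case: side; case: side; case: side.
Qed.

End Helpers.

Theorem lemma4 (Bv Cv : finType) (E : Bv -> Cv -> bool) (HG : bus_graph E)
    (A A' B B' C O : Bv) (x y z o i : Cv)
    (Hfl : flipper E A A' B B' C x y z o)
    (Hi : i \notin [:: x; y; z; o]) (HO : O \notin [:: A; A'; B; B'; C])
    (HBi : E B i) (HOo : E O o)
    (gb : Bv -> seg) (gc : Cv -> point) (HR : realization E gb gc) :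
  perpendicular (edge_seg (gb B) (gc i)) (edge_seg (gb O) (gc o)) /\
  perpendicular (gb B) (gb O).
Proof.
case: Hfl => [[_ U Ex Ey Ez] _ EBo EB'o].
move: U; rewrite /= !inE.
move=> /andP [/norP [nAA' /norP [nAB /norP [nAB' nAC]]]].
move=> /andP [/norP [nA'B /norP [nA'B' nA'C]]].
move=> /andP [/norP [nBB' nBC]] /andP [nB'C _].
move: Ex Ey Ez => /and4P [Ax A'x Bx B'x] /and4P [Ay A'y By Cy] /and4P [Az A'z B'z Cz].
move: HO; rewrite !inE => /norP [nOA /norP [nOA' /norP [nOB /norP [nOB' nOC]]]].
have T := no3 HR.
have U3 : forall (u v w : Bv), u != v -> u != w -> v != w -> uniq [:: u; v; w].
  by move=> u v w h1 h2 h3; rewrite /= !inE negb_or h1 h2 h3.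
have nB'B : B' != B by rewrite eq_sym.
have nOB3 : B' != O by rewrite eq_sym.
have nOB2 : B != O by rewrite eq_sym.
have perpB : horiz (gb B) != horiz (gb O).
  have k1 := T _ _ _ _ Ax A'x Bx (U3 _ _ _ nAA' nAB nA'B).
  have k2 := T _ _ _ _ Ax A'x B'x (U3 _ _ _ nAA' nAB' nA'B').
  have k3 := T _ _ _ _ Ax Bx B'x (U3 _ _ _ nAB nAB' nBB').
  have k4 := T _ _ _ _ A'x Bx B'x (U3 _ _ _ nA'B nA'B' nBB').
  have k5 := T _ _ _ _ Ay A'y Cy (U3 _ _ _ nAA' nAC nA'C).
  have k6 := T _ _ _ _ Ay By Cy (U3 _ _ _ nAB nAC nBC).
  have k7 := T _ _ _ _ A'y By Cy (U3 _ _ _ nA'B nA'C nBC).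
  have k8 := T _ _ _ _ Az B'z Cz (U3 _ _ _ nAB' nAC nB'C).
  have k9 := T _ _ _ _ A'z B'z Cz (U3 _ _ _ nA'B' nA'C nB'C).
  have k10 := T _ _ _ _ EBo EB'o HOo (U3 _ _ _ nBB' nOB2 nOB3).
  move: k1 k2 k3 k4 k5 k6 k7 k8 k9 k10.
  case: (horiz (gb A)); case: (horiz (gb A')); case: (horiz (gb B));
  case: (horiz (gb B')); case: (horiz (gb C)); case: (horiz (gb O)) => //=;
  move=> k1 k2 k3 k4 k5 k6 k7 k8 k9 k10; exfalso;
  first [ by apply: k1 | by apply: k2 | by apply: k3 | by apply: k4 | by apply: k5
        | by apply: k6 | by apply: k7 | by apply: k8 | by apply: k9 | by apply: k10 ].
split => //.
by rewrite /perpendicular /edge_seg; case: (horiz (gb B)) (horiz (gb O)) perpB => [] [].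
Qed.
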